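(* Let $X$ be a complete metric space and $\mathcal Z_{\mathcal S}=(X,(\phi_j)_{j=0}^{n-1},(\rho_j)_{j=0}^{n-1})$ a Matkowski contractive GIFZS of degree $m$ with a proper family $(\rho_j)$, and let $u_{\mathcal Z}$ be its fuzzy attractor. Let $I=\{j:\rho_j(1)=1\}$, $\mathcal S=(X,(\phi_j)_{j=0}^{n-1})$ and $\mathcal S'=(X,(\phi_j)_{j\in I})$. Then $[u_{\mathcal Z}]^0=A_{\mathcal S}$ and $[u_{\mathcal Z}]^1=A_{\mathcal S'}$.
   Context: A fuzzy subset of $X$ is $u:X\to[0,1]$. For $\alpha\in(0,1]$, $[u]^\alpha=\{x:u(x)\ge\alpha\}$, $[u]^0=\overline{\{x:u(x)>0\}}$. $\mathcal F_X^*$: fuzzy subsets that are normal, usc and compactly supported. $X^m$ has the maximum metric $d^m$. For $T:Z\to Y$, $T(u)(y)=\sup\{u(z):T(z)=y\}$ if $y\in T(Z)$, else $0$; $\rho(u)=\rho\circ u$; $(u_0\times\cdots\times u_{m-1})(x_0,\dots,x_{m-1})=\min_iu_i(x_i)$; $\vee$ is pointwise max. A family $(\rho_j)$ of maps $[0,1]\to[0,1]$ is admissible if each is nondecreasing, right continuous, $\rho_j(0)=0$, and $\rho_j(1)=1$ for some $j$. For each $j$: $r_+^j=\inf\{t:\rho_j(t)>0\}$ and $\beta_j(\alpha)=\inf\{t\in[0,1]:\rho_j(t)\ge\alpha\}$ for $\alpha\in[0,\rho_j(1)]$. An admissible family is proper if $r_+^j=0$ and $\beta_j(\rho_j(1))=1$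 for all $j$. A GIFS of degree $m$ is $(X,(\phi_j))$ with continuous $\phi_j:X^m\to X$; it is Matkowski contractive if each $\phi_j$ satisfies $d(\phi_j(x),\phi_j(y))\le\varphi_j(d^m(x,y))$ for some nondecreasing $\varphi_j$ with $\varphi_j^{(k)}(t)\to0$ for all $t>0$; on complete $X$ its attractor $A_{\mathcal S}$ is the unique nonempty compact $A$ with $A=\bigcup_j\phi_j(A\times\cdots\times A)$. The GIFZS operator is $\mathcal Z_{\mathcal S}(u_0,\dots,u_{m-1})=\bigvee_j\rho_j(\phi_j(u_0\times\cdots\times u_{m-1}))$ and the fuzzy attractor is the unique $u_{\mathcal Z}\in\mathcal F_X^*$ with $\mathcal Z_{\mathcal S}(u_{\mathcal Z},\dots,u_{\mathcal Z})=u_{\mathcal Z}$. *)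

(* Defs.v *)
From Stdlib Require Import Reals Lra ClassicalEpsilon List.
Open Scope R_scope.

Definition is_glb (E : R -> Prop) (l : R) : Prop :=
  (forall x, E x -> l <= x) /\ (forall b, (forall x, E x -> b <= x) -> b <= l).

(* sup in [0,1]: the least upper bound if it exists, else 0 (so sup of the empty set is 0). *)
Definition sup01 (E : R -> Prop) : R :=
  match excluded_middle_informative (exists l, is_lub E l) with
  | left H => proj1_sig (constructive_indefinite_description _ H)
  | right _ => 0
  end.

(* inf in [0,1]: the greatest lower bound if it exists, else 1 (so inf of the empty set is 1). *)
Definition inf01 (E : R -> Prop) : R :=
  match excluded_middle_informative (exists l, is_glb E l) with
  | left H => proj1_sig (constructive_indefinite_description _ H)
  | right _ => 1
  end.

Section Metric.
Variable X : Metric_Space.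
Local Notation P := (Base X).
Local Notation d := (dist X).

Definition Cauchy_seq (s : nat -> P) : Prop :=
  forall eps, eps > 0 -> exists N, forall p q, (p >= N)%nat -> (q >= N)%nat -> d (s p) (s q) < eps.
Definition converges (s : nat -> P) (l : P) : Prop :=
  forall eps, eps > 0 -> exists N, forall p, (p >= N)%nat -> d (s p) l < eps.
Definition complete : Prop :=
  forall s, Cauchy_seq s -> exists l, converges s l.

Definition open_set (U : P -> Prop) : Prop :=
  forall x, U x -> exists eps, eps > 0 /\ forall y, d x y < eps -> U y.

Definition compact (A : P -> Prop) : Prop :=
  forall (I : Type) (U : I -> P -> Prop),
    (forall i, open_set (U i)) ->
    (forall x, A x -> exists i, U i x) ->
    exists l : list I, forall x, A x -> exists i, In i l /\ U i x.

Definition closure (S : P -> Prop) (x : P) : Prop :=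
  forall eps, eps > 0 -> exists y, S y /\ d x y < eps.

Definition cut (u : P -> R) (alpha : R) (x : P) : Prop := u x >= alpha.
Definition cut0 (u : P -> R) : P -> Prop := closure (fun x => u x > 0).

Definition usc (u : P -> R) : Prop :=
  forall x eps, eps > 0 -> exists delta, delta > 0 /\
    forall y, d x y < delta -> u y < u x + eps.

Definition in_Fstar (u : P -> R) : Prop :=
  (forall x, 0 <= u x <= 1) /\ (exists x, u x = 1) /\ usc u /\ compact (cut0 u).
End Metric.

Definition Idx (m : nat) : Type := {i : nat | (i < m)%nat}.

Definition dmax (X : Metric_Space) (m : nat) (x y : Idx m -> Base X) : R :=
  sup01 (fun r => exists i : Idx m, r = dist X (x i) (y i)).

Definition continuous_m (X : Metric_Space) (m : nat) (f : (Idx m -> Base X) -> Base X) : Prop :=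
  forall x eps, eps > 0 -> exists delta, delta > 0 /\
    forall y, dmax X m x y < delta -> dist X (f x) (f y) < eps.

Definition matkowski (X : Metric_Space) (m : nat) (f : (Idx m -> Base X) -> Base X) : Prop :=
  exists vphi : R -> R,
    (forall t, 0 <= t -> 0 <= vphi t) /\
    (forall s t, 0 <= s -> s <= t -> vphi s <= vphi t) /\
    (forall t, t > 0 -> Un_cv (fun k => Nat.iter k vphi t) 0) /\
    (forall x y, dist X (f x) (f y) <= vphi (dmax X m x y)).

Definition fimg {Z Y : Type} (T : Z -> Y) (u : Z -> R) (y : Y) : R :=
  match excluded_middle_informative (exists z, T z = y) with
  | left _ => sup01 (fun r => exists z, T z = y /\ r = u z)
  | right _ => 0
  end.

Definition fprod {Y : Type} (m : nat) (u : Idx m -> Y -> R) (x : Idx m -> Y) : R :=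
  inf01 (fun r => exists i : Idx m, r = u i (x i)).

Definition Zop (X : Metric_Space) (m n : nat)
  (phi : nat -> (Idx m -> Base X) -> Base X) (rho : nat -> R -> R)
  (u : Idx m -> Base X -> R) (x : Base X) : R :=
  sup01 (fun r => exists j, (j < n)%nat /\ r = rho j (fimg (phi j) (fprod m u) x)).

Definition admissible (n : nat) (rho : nat -> R -> R) : Prop :=
  (forall j, (j < n)%nat ->
     (forall t, 0 <= t <= 1 -> 0 <= rho j t <= 1) /\
     (forall s t, 0 <= s -> s <= t -> t <= 1 -> rho j s <= rho j t) /\
     (forall t, 0 <= t < 1 -> forall eps, eps > 0 -> exists delta, delta > 0 /\
        forall s, t <= s -> s < t + delta -> s <= 1 -> Rabs (rho j s - rho j t) < eps) /\
     rho j 0 = 0) /\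
  (exists j, (j < n)%nat /\ rho j 1 = 1).

(* r_+^j = inf{t in [0,1] : rho_j t > 0} = 0  and  beta_j(rho_j 1) = inf{t in [0,1] : rho_j t >= rho_j 1} = 1 *)
Definition proper (n : nat) (rho : nat -> R -> R) : Prop :=
  admissible n rho /\
  forall j, (j < n)%nat ->
    is_glb (fun t => 0 <= t <= 1 /\ rho j t > 0) 0 /\
    is_glb (fun t => 0 <= t <= 1 /\ rho j t >= rho j 1) 1.

Definition hutch_fixed (X : Metric_Space) (m : nat) (J : nat -> Prop)
  (phi : nat -> (Idx m -> Base X) -> Base X) (A : Base X -> Prop) : Prop :=
  forall x, A x <-> exists j, J j /\ exists a : Idx m -> Base X, (forall i, A (a i)) /\ phi j a = x.

Definition is_attractor (X : Metric_Space) (m : nat) (J : nat -> Prop)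
  (phi : nat -> (Idx m -> Base X) -> Base X) (A : Base X -> Prop) : Prop :=
  (exists x, A x) /\ compact X A /\ hutch_fixed X m J phi A /\
  (forall B, (exists x, B x) -> compact X B -> hutch_fixed X m J phi B -> forall x, B x <-> A x).

Definition is_fuzzy_attractor (X : Metric_Space) (m n : nat)
  (phi : nat -> (Idx m -> Base X) -> Base X) (rho : nat -> R -> R) (u : Base X -> R) : Prop :=
  in_Fstar X u /\ (forall x, Zop X m n phi rho (fun _ => u) x = u x) /\
  (forall v, in_Fstar X v -> (forall x, Zop X m n phi rho (fun _ => v) x = v x) -> forall x, v x = u x).

(* Main.v *)
Require Import Defs.
From Stdlib Require Import Reals Lra Lia ClassicalEpsilon Classical List.
Open Scope R_scope.

Lemma sup01_cases (E : R -> Prop) :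
  is_lub E (sup01 E) \/ (~ (exists l, is_lub E l) /\ sup01 E = 0).
Proof.
  unfold sup01. destruct (excluded_middle_informative _) as [H|H].
  - left. exact (proj2_sig (constructive_indefinite_description _ H)).
  - right. auto.
Qed.

Lemma inf01_cases (E : R -> Prop) :
  is_glb E (inf01 E) \/ (~ (exists l, is_glb E l) /\ inf01 E = 1).
Proof.
  unfold inf01. destruct (excluded_middle_informative _) as [H|H].
  - left. exact (proj2_sig (constructive_indefinite_description _ H)).
  - right. auto.
Qed.

Lemma lub_exists (E : R -> Prop) c r0 : (forall r, E r -> r <= c) -> E r0 ->
  exists l, is_lub E l.
Proof.
  intros Hc H0. destruct (completeness E) as [l Hl].
  - exists c. intros r Hr. apply Hc; auto.
  - eauto.
  - eauto.
Qed.

Lemma glb_exists (E : R -> Prop) c r0 : (forall r, E r -> c <= r) -> E r0 ->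
  exists l, is_glb E l.
Proof.
  intros Hc H0. destruct (completeness (fun y => E (- y))) as [l [Hl1 Hl2]].
  - exists (- c). intros r Hr. apply Hc in Hr. lra.
  - exists (- r0). rewrite Ropp_involutive. auto.
  - exists (- l). split.
    + intros x Hx. assert (- x <= l). { apply Hl1. rewrite Ropp_involutive; auto. } lra.
    + intros b Hb. assert (l <= - b). { apply Hl2. intros y Hy. apply Hb in Hy. lra. } lra.
Qed.

Lemma sup01_le (E : R -> Prop) c : (forall r, E r -> r <= c) -> sup01 E <= Rmax c 0.
Proof.
  intros Hc. destruct (sup01_cases E) as [[H1 H2]|[_ H]].
  - apply H2. intros r Hr. apply Hc in Hr. pose proof (Rmax_l c 0). lra.
  - rewrite H. apply Rmax_r.
Qed.

Lemma sup01_ge (E : R -> Prop) r0 : (forall r, E r -> r <= 1) -> E r0 -> r0 <= sup01 E.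
Proof.
  intros Hc H0. destruct (sup01_cases E) as [[H1 H2]|[H _]].
  - apply H1; auto.
  - exfalso. apply H. eapply lub_exists; eauto.
Qed.

Lemma sup01_bounds (E : R -> Prop) : (forall r, E r -> 0 <= r <= 1) -> 0 <= sup01 E <= 1.
Proof.
  intros Hc. destruct (sup01_cases E) as [[H1 H2]|[_ H]].
  - split.
    + destruct (classic (exists r, E r)) as [[r Hr]|Hn].
      * pose proof (H1 r Hr). pose proof (Hc r Hr). lra.
      * assert (sup01 E <= sup01 E - 1). { apply H2. intros r Hr. exfalso; eauto. } lra.
    + apply H2. intros r Hr. apply Hc; auto.
  - rewrite H. lra.
Qed.

Lemma inf01_bounds (E : R -> Prop) : (forall r, E r -> 0 <= r <= 1) -> 0 <= inf01 E <= 1.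
Proof.
  intros Hc. destruct (inf01_cases E) as [[H1 H2]|[_ H]].
  - split.
    + apply H2. intros r Hr. apply Hc; auto.
    + destruct (classic (exists r, E r)) as [[r Hr]|Hn].
      * pose proof (H1 r Hr). pose proof (Hc r Hr). lra.
      * assert (inf01 E + 1 <= inf01 E). { apply H2. intros r Hr. exfalso; eauto. } lra.
  - rewrite H. lra.
Qed.

Lemma inf01_le (E : R -> Prop) r0 : (forall r, E r -> 0 <= r) -> E r0 -> inf01 E <= r0.
Proof.
  intros Hc H0. destruct (inf01_cases E) as [[H1 H2]|[H _]].
  - apply H1; auto.
  - exfalso. apply H. eapply glb_exists; eauto.
Qed.

Lemma inf01_ge (E : R -> Prop) c : (forall r, E r -> c <= r) -> c <= 1 -> c <= inf01 E.
Proof.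
  intros Hc H1. destruct (inf01_cases E) as [[_ H2]|[_ H]].
  - apply H2; auto.
  - lra.
Qed.

Lemma fin_max (f : nat -> R) p : (0 < p)%nat -> exists i, (i < p)%nat /\ forall k, (k < p)%nat -> f k <= f i.
Proof.
  induction p as [|p IH]; intros Hp; [lia|].
  destruct (Nat.eq_dec p 0) as [->|Hp0].
  - exists 0%nat. split; [lia|]. intros k Hk. replace k with 0%nat by lia. lra.
  - destruct IH as [i [Hi Hm]]; [lia|].
    destruct (Rle_dec (f p) (f i)).
    + exists i. split; [lia|]. intros k Hk. destruct (Nat.eq_dec k p); [subst; auto|]. apply Hm; lia.
    + exists p. split; [lia|]. intros k Hk. destruct (Nat.eq_dec k p); [subst; lra|].
      pose proof (Hm k ltac:(lia)). lra.
Qed.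

Lemma fin_min (f : nat -> R) p : (0 < p)%nat -> exists i, (i < p)%nat /\ forall k, (k < p)%nat -> f i <= f k.
Proof.
  intros Hp. destruct (fin_max (fun k => - f k) p Hp) as [i [Hi H]].
  exists i. split; auto. intros k Hk. apply H in Hk. lra.
Qed.

Lemma inv_small eps : eps > 0 -> exists N, forall k, (k >= N)%nat -> / INR (S k) < eps.
Proof.
  intros He. destruct (archimed_cor1 eps He) as [N [HN HN0]].
  exists N. intros k Hk. eapply Rle_lt_trans; [|exact HN].
  apply Rinv_le_contravar. apply lt_0_INR; lia. apply le_INR; lia.
Qed.

Lemma inv_pos k : 0 < / INR (S k).
Proof. apply Rinv_0_lt_compat. apply lt_0_INR; lia. Qed.

Section Met.
Variable X : Metric_Space.
Local Notation P := (Base X).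
Local Notation d := (dist X).

Lemma d_sym x y : d x y = d y x. Proof. apply dist_sym. Qed.
Lemma d_tri x y z : d x y <= d x z + d z y. Proof. apply dist_tri. Qed.
Lemma d_pos x y : 0 <= d x y. Proof. pose proof (dist_pos X x y). lra. Qed.

Lemma closure_closed S x : closure X (closure X S) x -> closure X S x.
Proof.
  intros H eps He. destruct (H (eps/2)) as [y [Hy Hxy]]; [lra|].
  destruct (Hy (eps/2)) as [z [Hz Hyz]]; [lra|].
  exists z. split; auto. pose proof (d_tri x z y). lra.
Qed.

Lemma eq_of_small x y : (forall eps, eps > 0 -> d x y < eps) -> x = y.
Proof.
  intros H. apply (dist_refl X). pose proof (d_pos x y).
  destruct (Req_dec (d x y) 0); auto. specialize (H (d x y)). lra.
Qed.

Fixpoint maxN (l : list (P * R * nat)) : nat :=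
  match l with nil => 0%nat | p :: l' => Nat.max (snd p) (maxN l') end.

Lemma maxN_in l p : In p l -> (snd p <= maxN l)%nat.
Proof.
  induction l; simpl; intros H; [contradiction|]. destruct H; subst; [lia|].
  specialize (IHl H). lia.
Qed.

Lemma cluster (K : P -> Prop) (s : nat -> P) : Defs.compact X K ->
  (forall y, closure X K y -> K y) -> (forall k, K (s k)) ->
  exists y, K y /\ forall eps, eps > 0 -> forall N, exists k, (k >= N)%nat /\ d (s k) y < eps.
Proof.
  intros Hc Hcl Hs. apply NNPP. intros Hn.
  set (U := fun (t : P * R * nat) (z : P) =>
    let '(y, e, N) := t in K y /\ e > 0 /\ (forall k, (k >= N)%nat -> d (s k) y >= e) /\ d y z < e).
  destruct (Hc _ U) as [l Hl].
  - intros [[y e] N] z [Hy [He [HN Hz]]]. exists (e - d y z). split; [lra|].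
    intros w Hw. repeat split; auto. pose proof (d_tri y w z). rewrite (d_sym z w) in *. lra.
  - intros z Hz. assert (~ forall eps, eps > 0 -> forall N, exists k, (k >= N)%nat /\ d (s k) z < eps) as H1.
    { intros H; apply Hn; eauto. }
    apply not_all_ex_not in H1. destruct H1 as [e H1].
    apply imply_to_and in H1. destruct H1 as [He H1].
    apply not_all_ex_not in H1. destruct H1 as [N H1].
    exists (z, e, N). simpl. repeat split; auto.
    + intros k Hk. apply Rnot_lt_ge. intros Hlt. apply H1. eauto.
    + rewrite (proj2 (dist_refl X z z) eq_refl). lra.
  - destruct (Hl (s (maxN l)) (Hs _)) as [[[y e] N] [Hin [Hy [He [HN Hz]]]]].
    apply maxN_in in Hin. simpl in Hin. specialize (HN _ Hin). rewrite d_sym in HN. lra.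
Qed.

Lemma subseq (s : nat -> P) y :
  (forall eps, eps > 0 -> forall N, exists k, (k >= N)%nat /\ d (s k) y < eps) ->
  exists sg : nat -> nat, (forall k, (k <= sg k)%nat) /\
    forall eps, eps > 0 -> exists N, forall k, (k >= N)%nat -> d (s (sg k)) y < eps.
Proof.
  intros H.
  assert (forall k, exists k', (k' >= k)%nat /\ d (s k') y < / INR (S k)) as H2.
  { intros k. apply H. apply inv_pos. }
  destruct (choice _ H2) as [sg Hsg].
  exists sg. split; [intros k; apply Hsg|].
  intros eps He. destruct (inv_small eps He) as [N HN]. exists N. intros k Hk.
  specialize (HN k Hk). pose proof (proj2 (Hsg k)). lra.
Qed.

Lemma extract (m : nat) (K : P -> Prop) (b : nat -> Idx m -> P) : Defs.compact X K ->
  (forall y, closure X K y -> K y) -> (forall k i, K (b k i)) -> forall (x0 : P) p,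
  exists (sg : nat -> nat) (y : Idx m -> P), (forall k, (k <= sg k)%nat) /\
    (forall i, K (y i) \/ (proj1_sig i >= p)%nat) /\
    forall eps, eps > 0 -> exists N, forall k, (k >= N)%nat -> forall i : Idx m, (proj1_sig i < p)%nat ->
      d (b (sg k) i) (y i) < eps.
Proof.
  intros Hc Hcl Hb x0 p. induction p as [|p IH].
  - exists (fun k => k), (fun _ => x0). split; [auto|]. split; [intros; right; lia|].
    intros eps He. exists 0%nat. intros k _ i Hi. lia.
  - destruct IH as [sg [y [Hsg [Hy Hc1]]]].
    destruct (Compare_dec.lt_dec p m) as [Hpm|Hpm].
    + set (t := fun k => b (sg k) (exist _ p Hpm)).
      destruct (cluster K t Hc Hcl (fun k => Hb _ _)) as [y' [Hy' Hcl']].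
      destruct (subseq t y' Hcl') as [tau [Htau Hconv]].
      exists (fun k => sg (tau k)), (fun i => if Nat.eq_dec (proj1_sig i) p then y' else y i).
      split; [intros k; specialize (Htau k); specialize (Hsg (tau k)); lia|].
      split.
      * intros i. destruct (Nat.eq_dec (proj1_sig i) p); [left; auto|].
        destruct (Hy i); [left; auto| right; lia].
      * intros eps He. destruct (Hc1 eps He) as [N1 HN1]. destruct (Hconv eps He) as [N2 HN2].
        exists (Nat.max N1 N2). intros k Hk i Hi.
        destruct (Nat.eq_dec (proj1_sig i) p) as [Heq|Hne].
        -- destruct i as [i hi]. simpl in Heq. subst i.
           rewrite (Peano_dec.le_unique _ _ hi Hpm). apply HN2. lia.
        -- apply HN1; [specialize (Htau k); lia | lia].
    + exists sg, y. split; auto. split.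
      * intros i. destruct (Hy i); [left; auto|]. destruct i as [i hi]; simpl in *. lia.
      * intros eps He. destruct (Hc1 eps He) as [N HN]. exists N. intros k Hk i Hi.
        apply HN; auto. destruct i as [i hi]; simpl in *. lia.
Qed.

Lemma extract_all (m : nat) (K : P -> Prop) (b : nat -> Idx m -> P) : Defs.compact X K ->
  (forall y, closure X K y -> K y) -> (forall k i, K (b k i)) -> forall (x0 : P),
  exists (sg : nat -> nat) (y : Idx m -> P), (forall k, (k <= sg k)%nat) /\
    (forall i, K (y i)) /\
    (forall eps, eps > 0 -> exists N, forall k, (k >= N)%nat -> dmax X m y (b (sg k)) < eps) /\
    (forall eps, eps > 0 -> exists N, forall k, (k >= N)%nat -> forall i, d (y i) (b (sg k) i) < eps).
Proof.
  intros Hc Hcl Hb x0. destruct (extract m K b Hc Hcl Hb x0 m) as [sg [y [H1 [H2 H3]]]].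
  exists sg, y. split; auto. split; [|split].
  - intros i. destruct (H2 i); auto. destruct i as [i hi]; simpl in *; lia.
  - intros eps He. destruct (H3 (eps/2)) as [N HN]; [lra|]. exists N. intros k Hk.
    unfold dmax. eapply Rle_lt_trans. apply sup01_le with (c := eps/2).
    + intros r [i ->]. left. rewrite d_sym. apply HN; auto. destruct i; simpl; auto.
    + unfold Rmax. destruct (Rle_dec _ _); lra.
  - intros eps He. destruct (H3 eps He) as [N HN]. exists N. intros k Hk i.
    rewrite d_sym. apply HN; auto. destruct i; simpl; auto.
Qed.

Lemma dmax_le (m : nat) (a b : Idx m -> P) c : 0 <= c -> (forall i, d (a i) (b i) <= c) -> dmax X m a b <= c.
Proof.
  intros Hc H. unfold dmax. eapply Rle_trans. apply sup01_le with (c := c).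
  - intros r [i ->]. auto.
  - unfold Rmax. destruct (Rle_dec _ _); lra.
Qed.

End Met.

Lemma compact_sub (X : Metric_Space) (K C : Base X -> Prop) : Defs.compact X K ->
  (forall x, C x -> K x) -> Defs.open_set X (fun x => ~ C x) -> Defs.compact X C.
Proof.
  intros HK HCK Ho I U HU Hcov.
  set (U' := fun (o : option I) => match o with Some i => U i | None => fun x => ~ C x end).
  destruct (HK _ U') as [l Hl].
  - intros [i|]; simpl; auto.
  - intros x Hx. destruct (classic (C x)) as [Hc|Hc].
    + destruct (Hcov x Hc) as [i Hi]. exists (Some i). exact Hi.
    + exists None. exact Hc.
  - exists (flat_map (fun o => match o with Some i => i :: nil | None => nil end) l).
    intros x Hx. destruct (Hl x (HCK x Hx)) as [[i|] [Hin Hu]].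
    + exists i. split; auto. apply in_flat_map. exists (Some i). simpl; auto.
    + simpl in Hu. contradiction.
Qed.

Lemma pigeon (n : nat) (f : nat -> nat) : (forall k, (f k < n)%nat) ->
  exists j, (j < n)%nat /\ forall N, exists k, (k >= N)%nat /\ f k = j.
Proof.
  revert f. induction n as [|n IH]; intros f Hf.
  - specialize (Hf 0%nat). lia.
  - destruct (classic (forall N, exists k, (k >= N)%nat /\ f k = n)) as [H|H].
    + exists n. split; auto.
    + apply not_all_ex_not in H. destruct H as [N0 H].
      assert (forall k, (f (k + N0) < n)%nat) as Hf'.
      { intros k. specialize (Hf (k + N0)%nat). destruct (Nat.eq_dec (f (k + N0)%nat) n); [|lia].
        exfalso. apply H. exists (k + N0)%nat. split; auto; lia. }
      destruct (IH _ Hf') as [j [Hj Hinf]]. exists j. split; [lia|].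
      intros N. destruct (Hinf N) as [k [Hk Hfk]]. exists (k + N0)%nat. split; auto; lia.
Qed.

Section Fz.
Variable X : Metric_Space.
Local Notation P := (Base X).
Variable m : nat.
Variable u : P -> R.
Hypothesis Hu01 : forall x, 0 <= u x <= 1.

Lemma fprod_bounds a : 0 <= fprod m (fun _ => u) a <= 1.
Proof. apply inf01_bounds. intros r [i ->]. apply Hu01. Qed.

Lemma fprod_le a i : fprod m (fun _ => u) a <= u (a i).
Proof. apply inf01_le. intros r [i' ->]. apply Hu01. exists i; auto. Qed.

Lemma fprod_ge a c : c <= 1 -> (forall i, c <= u (a i)) -> c <= fprod m (fun _ => u) a.
Proof. intros Hc H. apply inf01_ge; auto. intros r [i ->]. auto. Qed.

Variable f : (Idx m -> P) -> P.

Lemma fimg_bounds x : 0 <= fimg f (fprod m (fun _ => u)) x <= 1.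
Proof.
  unfold fimg. destruct (excluded_middle_informative _); [|lra].
  apply sup01_bounds. intros r [z [_ ->]]. apply fprod_bounds.
Qed.

Lemma fimg_ge a x : f a = x -> fprod m (fun _ => u) a <= fimg f (fprod m (fun _ => u)) x.
Proof.
  intros Ha. unfold fimg. destruct (excluded_middle_informative _) as [_|Hn]; [|exfalso; eauto].
  apply sup01_ge. intros r [z [_ ->]]. apply fprod_bounds. exists a; auto.
Qed.

Lemma fimg_gt x c : fimg f (fprod m (fun _ => u)) x > Rmax c 0 ->
  exists a, f a = x /\ fprod m (fun _ => u) a > c.
Proof.
  intros H. unfold fimg in H. destruct (excluded_middle_informative _) as [_|Hn].
  - apply NNPP. intros Hn. assert (sup01 (fun r => exists z, f z = x /\ r = fprod m (fun _ => u) z) <= Rmax c 0).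
    { apply sup01_le. intros r [z [Hz ->]]. apply Rnot_lt_le. intros Hl. apply Hn. eauto. }
    lra.
  - pose proof (Rmax_r c 0). lra.
Qed.
End Fz.

Lemma rho_pos n rho j t : proper n rho -> (j < n)%nat -> 0 < t <= 1 -> rho j t > 0.
Proof.
  intros [[Had _] Hpr] Hj Ht. destruct (Had j Hj) as [Hr [Hmono _]].
  destruct (Hpr j Hj) as [[_ Hg] _].
  apply Rnot_le_gt. intros Hle.
  assert (t <= 0); [|lra]. apply Hg. intros s [Hs Hrs].
  apply Rnot_lt_le. intros Hst. assert (rho j s <= rho j t) by (apply Hmono; lra). lra.
Qed.

Lemma rho_one n rho j t : proper n rho -> (j < n)%nat -> 0 <= t <= 1 -> rho j t >= 1 -> t = 1 /\ rho j 1 = 1.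
Proof.
  intros [[Had _] Hpr] Hj Ht Hr1. destruct (Had j Hj) as [Hr [Hmono _]].
  destruct (Hpr j Hj) as [_ [Hg _]].
  assert (rho j t <= rho j 1) by (apply Hmono; lra).
  pose proof (Hr 1 ltac:(lra)). split; [|lra].
  destruct (Req_dec t 1); auto. assert (1 <= t); [|lra]. apply Hg. split; [lra|]. lra.
Qed.

Theorem mainTheorem17 (X : Metric_Space) (m n : nat)
  (phi : nat -> (Idx m -> Base X) -> Base X) (rho : nat -> R -> R)
  (uZ : Base X -> R) (A A' : Base X -> Prop) :
  complete X ->
  (forall j, (j < n)%nat -> continuous_m X m (phi j)) ->
  (forall j, (j < n)%nat -> matkowski X m (phi j)) ->
  proper n rho ->
  is_fuzzy_attractor X m n phi rho uZ ->
  is_attractor X m (fun j => (j < n)%nat) phi A ->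
  is_attractor X m (fun j => (j < n)%nat /\ rho j 1 = 1) phi A' ->
  (forall x, cut0 X uZ x <-> A x) /\ (forall x, cut X uZ 1 x <-> A' x).
Proof.
  intros Hcomp Hcont Hmat Hprop [HF [Hfix Huniq]] [HA1 [HA2 [HA3 HA4]]] [HA'1 [HA'2 [HA'3 HA'4]]].
  destruct HF as [Hu01 [[x1 Hx1] [Husc HK]]].
  pose proof Hprop as [[Had [j0 [Hj0 Hrj0]]] Hpr].
  assert (Hrange: forall j, (j<n)%nat -> forall t, 0<=t<=1 -> 0 <= rho j t <= 1) by (intros; apply Had; auto).
  assert (Hr0: forall j, (j<n)%nat -> rho j 0 = 0) by (intros; apply Had; auto).
  assert (HFb : forall j x, 0 <= fimg (phi j) (fprod m (fun _ => uZ)) x <= 1)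
    by (intros; apply fimg_bounds; auto).
  assert (HZ : forall x, uZ x = sup01 (fun r => exists j, (j<n)%nat /\
              r = rho j (fimg (phi j) (fprod m (fun _ => uZ)) x))).
  { intros x. rewrite <- Hfix. reflexivity. }
  assert (Zge : forall j x, (j<n)%nat -> rho j (fimg (phi j) (fprod m (fun _ => uZ)) x) <= uZ x).
  { intros j x Hj. rewrite HZ. apply sup01_ge.
    - intros r [j' [Hj' ->]]. apply Hrange; auto.
    - eauto. }
  assert (Zpos: forall x, uZ x > 0 -> exists j, (j<n)%nat /\ rho j (fimg (phi j) (fprod m (fun _ => uZ)) x) > 0).
  { intros x Hx. apply NNPP; intro Hn. rewrite HZ in Hx.
    assert (sup01 (fun r => exists j, (j<n)%nat /\
              r = rho j (fimg (phi j) (fprod m (fun _ => uZ)) x)) <= Rmax 0 0).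
    { apply sup01_le. intros r [j [Hj ->]]. apply Rnot_lt_le. intros Hl. apply Hn. eauto. }
    rewrite Rmax_left in H by lra. lra. }
  assert (Zone: forall x, uZ x >= 1 -> exists j, (j<n)%nat /\ rho j (fimg (phi j) (fprod m (fun _ => uZ)) x) >= 1).
  { intros x Hx. destruct (fin_max (fun j => rho j (fimg (phi j) (fprod m (fun _ => uZ)) x)) n) as [jm [Hjm Hmax]]; [lia|].
    exists jm. split; auto. apply Rnot_lt_ge; intro Hl. rewrite HZ in Hx.
    assert (sup01 (fun r => exists j, (j<n)%nat /\
              r = rho j (fimg (phi j) (fprod m (fun _ => uZ)) x)) <=
            Rmax (rho jm (fimg (phi jm) (fprod m (fun _ => uZ)) x)) 0).
    { apply sup01_le. intros r [j [Hj ->]]. apply Hmax; auto. }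
    rewrite Rmax_left in H by (apply Hrange; auto). lra. }
  assert (HKc: forall y, closure X (cut0 X uZ) y -> cut0 X uZ y) by (intros; apply closure_closed; auto).
  assert (HSK: forall x, uZ x > 0 -> cut0 X uZ x).
  { intros x Hx eps He. exists x. split; auto. rewrite (proj2 (dist_refl X x x) eq_refl). lra. }
  assert (HhA : hutch_fixed X m (fun j => (j<n)%nat) phi (cut0 X uZ)).
  { intros x; split.
    - intros Hx.
      assert (Hseq: forall k, exists p : nat * (Idx m -> Base X), (fst p < n)%nat /\
                 dist X x (phi (fst p) (snd p)) < / INR (S k) /\ forall i, uZ (snd p i) > 0).
      { intros k. destruct (Hx (/INR (S k)) (inv_pos k)) as [xk [Hxk Hd]].
        destruct (Zpos xk Hxk) as [j [Hj Hrj]].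
        assert (Hgt: fimg (phi j) (fprod m (fun _ => uZ)) xk > Rmax 0 0).
        { rewrite Rmax_left by lra. destruct (Rle_lt_dec (fimg (phi j) (fprod m (fun _ => uZ)) xk) 0) as [Hle|]; auto.
          exfalso. assert (fimg (phi j) (fprod m (fun _ => uZ)) xk = 0) as E by (pose proof (HFb j xk); lra).
          rewrite E, Hr0 in Hrj; auto; lra. }
        destruct (fimg_gt X m uZ (phi j) xk 0 Hgt) as [a [Ha Hpa]].
        exists (j, a). simpl. split; auto. split. rewrite Ha; auto.
        intros i. pose proof (fprod_le X m uZ Hu01 a i). lra. }
      destruct (choice _ Hseq) as [g Hg].
      destruct (pigeon n (fun k => fst (g k))) as [j [Hj Hinf]]; [intros; apply Hg|].
      destruct (choice _ Hinf) as [tau Htau].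
      destruct (extract_all X m (cut0 X uZ) (fun k => snd (g (tau k))) HK HKc
                 (fun k i => HSK _ (proj2 (proj2 (Hg (tau k))) i)) x) as [sg [y [Hsg [Hy [Hdm _]]]]].
      exists j. split; auto. exists y. split; auto.
      apply eq_of_small. intros eps He.
      destruct (Hcont j Hj y (eps/2)) as [dl [Hdl Hc]]; [lra|].
      destruct (Hdm dl Hdl) as [N1 HN1]. destruct (inv_small (eps/2)) as [N2 HN2]; [lra|].
      specialize (Hc _ (HN1 (Nat.max N1 N2) ltac:(lia))).
      destruct (Hg (tau (sg (Nat.max N1 N2)))) as [_ [Hd _]].
      destruct (Htau (sg (Nat.max N1 N2))) as [Ht1 Ht2].
      rewrite Ht2 in Hd.
      specialize (HN2 (tau (sg (Nat.max N1 N2)))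
        ltac:(specialize (Hsg (Nat.max N1 N2)); lia)).
      pose proof (d_tri X (phi j y) x (phi j (snd (g (tau (sg (Nat.max N1 N2))))))).
      rewrite (d_sym X x) in Hd. lra.
    - intros [j [Hj [a [Ha Hphi]]]]. subst x. intros eps He.
      destruct (Hcont j Hj a eps He) as [dl [Hdl Hc]].
      assert (Hb: forall i, exists z, uZ z > 0 /\ dist X (a i) z < dl/2).
      { intros i. destruct (Ha i (dl/2)) as [z [Hz Hdz]]; [lra|]. eauto. }
      destruct (choice _ Hb) as [b Hb'].
      exists (phi j b). split.
      + assert (Hcx: exists c, 0 < c <= 1 /\ forall i, c <= uZ (b i)).
        { destruct (Nat.eq_dec m 0) as [Hm0|Hm0].
          - exists 1. split; [lra|]. intros [i hi]. lia.
          - destruct (fin_min (fun k => match Compare_dec.lt_dec k m with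
                         left h => uZ (b (exist _ k h)) | right _ => 1 end) m) as [i0 [Hi0 Hmin]]; [lia|].
            destruct (Compare_dec.lt_dec i0 m) as [l0|]; [|lia].
            exists (Rmin (uZ (b (exist _ i0 l0))) 1). split.
            * pose proof (proj1 (Hb' (exist _ i0 l0))). unfold Rmin; destruct (Rle_dec _ _); lra.
            * intros [i hi]. specialize (Hmin i hi). simpl in Hmin.
              destruct (Compare_dec.lt_dec i m) as [l|]; [|lia].
              rewrite (Peano_dec.le_unique _ _ l hi) in Hmin.
              pose proof (Rmin_l (uZ (b (exist _ i0 l0))) 1). lra. }
        destruct Hcx as [c [Hc1 Hc2]].
        pose proof (fprod_ge X m uZ b c (proj2 Hc1) Hc2).
        pose proof (fimg_ge X m uZ Hu01 (phi j) b (phi j b) eq_refl).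
        pose proof (HFb j (phi j b)).
        pose proof (rho_pos n rho j (fimg (phi j) (fprod m (fun _ => uZ)) (phi j b)) Hprop Hj ltac:(lra)).
        pose proof (Zge j (phi j b) Hj). lra.
      + apply Hc. apply Rle_lt_trans with (dl/2); [|lra].
        apply dmax_le; [lra|]. intros i. apply Rlt_le. apply (proj2 (Hb' i)). }
  assert (HhA' : hutch_fixed X m (fun j => (j<n)%nat /\ rho j 1 = 1) phi (cut X uZ 1)).
  { intros x; split.
    - intros Hx. unfold cut in Hx.
      destruct (Zone x Hx) as [j [Hj Hr]].
      destruct (rho_one n rho j _ Hprop Hj (HFb j x) Hr) as [HF1 Hr1].
      assert (Hseq: forall k, exists a, phi j a = x /\ forall i, uZ (a i) > 1 - / INR (S k)).
      { intros k. assert (Hlt: fimg (phi j) (fprod m (fun _ => uZ)) x > Rmax (1 - /INR (S k)) 0).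
        { pose proof (inv_pos k). unfold Rmax; destruct (Rle_dec _ _); lra. }
        destruct (fimg_gt X m uZ (phi j) x _ Hlt) as [a [Ha Hpa]]. exists a. split; auto.
        intros i. pose proof (fprod_le X m uZ Hu01 a i). lra. }
      destruct (choice _ Hseq) as [b Hb].
      assert (HbK: forall k i, cut0 X uZ (b k i)).
      { intros k i. apply HSK. pose proof (proj2 (Hb k) i).
        assert (1 <= INR (S k)) by (rewrite S_INR; pose proof (pos_INR k); lra).
        assert (/ INR (S k) <= 1). { rewrite <- Rinv_1. apply Rinv_le_contravar; lra. }
        lra. }
      destruct (extract_all X m (cut0 X uZ) b HK HKc HbK x) as [sg [y [Hsg [Hy [Hdm Hco]]]]].
      exists j. split; [split; auto|]. exists y. split.
      + intros i. unfold cut. apply Rnot_lt_ge. intros Hlt.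
        destruct (Husc (y i) ((1 - uZ (y i))/2)) as [dl [Hdl Hus]]; [lra|].
        destruct (Hco dl Hdl) as [N1 HN1]. destruct (inv_small ((1 - uZ (y i))/2)) as [N2 HN2]; [lra|].
        specialize (Hus _ (HN1 (Nat.max N1 N2) ltac:(lia) i)).
        specialize (HN2 (sg (Nat.max N1 N2)) ltac:(specialize (Hsg (Nat.max N1 N2)); lia)).
        pose proof (proj2 (Hb (sg (Nat.max N1 N2))) i). lra.
      + apply eq_of_small. intros eps He. destruct (Hcont j Hj y eps He) as [dl [Hdl Hc]].
        destruct (Hdm dl Hdl) as [N1 HN1]. specialize (Hc _ (HN1 N1 (le_n _))).
        rewrite (proj1 (Hb (sg N1))) in Hc. exact Hc.
    - intros [j [[Hj Hr1] [a [Ha Hphi]]]]. subst x. unfold cut in *.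
      assert (1 <= fprod m (fun _ => uZ) a) by (apply fprod_ge; [lra| intros i; specialize (Ha i); lra]).
      pose proof (fimg_ge X m uZ Hu01 (phi j) a (phi j a) eq_refl).
      pose proof (HFb j (phi j a)).
      assert (E: fimg (phi j) (fprod m (fun _ => uZ)) (phi j a) = 1) by lra.
      pose proof (Zge j (phi j a) Hj). rewrite E, Hr1 in H2. lra. }
  assert (HK1 : Defs.compact X (cut X uZ 1)).
  { apply (compact_sub X (cut0 X uZ)); auto.
    - intros x Hx. apply HSK. unfold cut in Hx. lra.
    - intros x Hx. unfold cut in Hx. destruct (Husc x (1 - uZ x)) as [dl [Hdl H]]; [lra|].
      exists dl. split; auto. intros y Hy. specialize (H y Hy). unfold cut. lra. }
  split.
  - intros x. apply (HA4 (cut0 X uZ)); auto. exists x1. apply HSK. lra.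
  - intros x. apply (HA'4 (cut X uZ 1)); auto. exists x1. unfold cut; lra.
Qed.
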